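(* Let $T:\mathcal{H}\to Y$ be a linear operator from a (real or complex) Hilbert space $\mathcal{H}$ to a Banach space $Y$. The following are equivalent: (i) $T$ is compact; (ii) $T$ maps every orthonormal subset of $\mathcal{H}$ into a relatively compact set; (iii) $T$ maps every orthonormal sequence of $\mathcal{H}$ to a norm-null sequence; (iv) for every orthonormal basis $A$ of $\mathcal{H}$ and every $\varepsilon>0$, the set $A_\varepsilon=\{a\in A:\|Ta\|\ge\varepsilon\}$ is finite; (v) $T$ maps every orthonormal basis of $\mathcal{H}$ into a relatively compact set.
   Context: A linear operator $T:\mathcal{H}\to Y$ is compact if $T(B_{\mathcal{H}})$ is relatively compact in $Y$, where $B_{\mathcal{H}}$ is the closed unit ball of $\mathcal{H}$. *)

(* Defs.v *)
From HB Require Import structures.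
From mathcomp Require Import all_boot all_order all_algebra.
From mathcomp Require Import all_classical all_reals all_analysis.
From mathcomp Require Import complex.
Set Implicit Arguments. Unset Strict Implicit. Unset Printing Implicit Defensive.
Import Order.TTheory GRing.Theory Num.Theory.
Import numFieldNormedType.Exports.
Local Open Scope classical_set_scope.
Local Open Scope ring_scope.

(* Scalars K with a conjugation [conj] (identity for real spaces,
   complex conjugation for complex spaces). *)

Definition is_inner_product (K : numFieldType) (conj : K -> K)
    (H : normedModType K) (inner : H -> H -> K) : Prop :=
  [/\ (forall (a : K) (x y z : H), inner (a *: x + y) z = a * inner x z + inner y z),
      (forall x y : H, inner y x = conj (inner x y)) &
      (forall x : H, inner x x = `|x| ^+ 2)].

Definition orthonormal_set (K : numFieldType) (H : normedModType K)
    (inner : H -> H -> K) (A : set H) : Prop :=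
  forall x y, A x -> A y -> inner x y = (if x == y then 1 else 0).

Definition orthonormal_seq (K : numFieldType) (H : normedModType K)
    (inner : H -> H -> K) (u : nat -> H) : Prop :=
  forall i j : nat, inner (u i) (u j) = (if i == j then 1 else 0).

Definition orthonormal_basis (K : numFieldType) (H : normedModType K)
    (inner : H -> H -> K) (A : set H) : Prop :=
  orthonormal_set inner A /\
  (forall x, (forall a, A a -> inner x a = 0) -> x = 0).

Definition relatively_compact (X : topologicalType) (A : set X) : Prop :=
  compact (closure A).

Definition compact_operator (K : numFieldType) (H Y : normedModType K)
    (T : H -> Y) : Prop :=
  relatively_compact (T @` [set x : H | `|x| <= 1]).

Definition theorem6_stmt (K : numFieldType) (conj : K -> K) : Prop :=
  forall (H : completeNormedModType K) (inner : H -> H -> K)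
         (Y : completeNormedModType K) (T : {linear H -> Y}),
  is_inner_product conj inner ->
  [<-> compact_operator T;
       forall A : set H, orthonormal_set inner A -> relatively_compact (T @` A);
       forall u : nat -> H, orthonormal_seq inner u ->
         (fun n => `|T (u n)|) @ \oo --> (0 : K);
       forall A : set H, orthonormal_basis inner A ->
         forall eps : K, 0 < eps -> finite_set [set a | A a /\ eps <= `|T a|];
       forall A : set H, orthonormal_basis inner A -> relatively_compact (T @` A)].

(* Main.v *)
Require Import Defs.
From HB Require Import structures.
From mathcomp Require Import all_boot all_order all_algebra.
From mathcomp Require Import all_classical all_reals all_analysis.
From mathcomp Require Import complex.
From mathcomp Require Import ring.
Set Implicit Arguments. Unset Strict Implicit. Unset Printing Implicit Defensive.
Import Order.TTheory GRing.Theory Num.Theory.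
Import numFieldNormedType.Exports.
Local Open Scope classical_set_scope.
Local Open Scope ring_scope.
Section Inner.
Variables (K : numFieldType) (conj : K -> K) (H : normedModType K)
  (inner : H -> H -> K).
Hypothesis hip : is_inner_product conj inner.

Lemma innerDl x y z : inner (x + y) z = inner x z + inner y z.
Proof. case: hip => h _ _; by have := h 1 x y z; rewrite scale1r mul1r. Qed.

Lemma inner0l z : inner 0 z = 0.
Proof.
have := innerDl 0 0 z; rewrite addr0 => /eqP.
by rewrite -subr_eq0 opprD addrA subrr sub0r oppr_eq0 => /eqP.
Qed.

Lemma innerZl a x z : inner (a *: x) z = a * inner x z.
Proof. case: hip => h _ _; by have := h a x 0 z; rewrite addr0 inner0l addr0. Qed.

Lemma innerNl x z : inner (- x) z = - inner x z.
Proof. by rewrite -scaleN1r innerZl mulN1r. Qed.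

Lemma innerBl x y z : inner (x - y) z = inner x z - inner y z.
Proof. by rewrite innerDl innerNl. Qed.

Lemma inner_suml (I : Type) (r : seq I) (P : pred I) (F : I -> H) z :
  inner (\sum_(i <- r | P i) F i) z = \sum_(i <- r | P i) inner (F i) z.
Proof.
exact: (big_morph (fun x => inner x z) (fun x y => innerDl x y z) (inner0l z)).
Qed.

Lemma innerxx x : inner x x = `|x| ^+ 2.
Proof. by case: hip. Qed.

Lemma conj_self x : conj (inner x x) = inner x x.
Proof. by case: hip => _ h _; rewrite -h. Qed.

Lemma conj0 : conj 0 = 0.
Proof. by have := conj_self 0; rewrite innerxx normr0 expr0n. Qed.

Lemma inner_sym0 x y : inner x y = 0 -> inner y x = 0.
Proof. by case: hip => _ h _ e; rewrite h e conj0. Qed.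

Lemma pythag a b : inner a b = 0 -> `|a + b| ^+ 2 = `|a| ^+ 2 + `|b| ^+ 2.
Proof.
move=> ab; have ba := inner_sym0 ab.
case: hip => _ h _.
rewrite -innerxx innerDl (h (a + b) a) (h (a + b) b) !innerDl ab ba.
by rewrite addr0 add0r !conj_self !innerxx.
Qed.

Lemma cs_unit x e : `|e| = 1 -> `|inner x e| <= `|x|.
Proof.
move=> e1; set c := inner x e.
have h1 : inner (x - c *: e) e = 0.
  by rewrite innerBl innerZl innerxx e1 expr1n mulr1 subrr.
have h2 : inner (c *: e) (x - c *: e) = 0.
  by rewrite innerZl (inner_sym0 h1) mulr0.
have := pythag h2; rewrite addrC subrK normrZ e1 mulr1 => hx.
rewrite -(ler_pXn2r (n:=2)) ?nnegrE //.
by rewrite hx lerDl exprn_ge0.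
Qed.

Lemma norm_unit x : inner x x = 1 -> `|x| = 1.
Proof.
by rewrite innerxx => /eqP; rewrite sqrp_eq1 // => /eqP.
Qed.

End Inner.

Section Topo.
Variables (K : numFieldType) (Y : normedModType K).

Definition tb (S : set Y) := forall e : K, 0 < e ->
  exists s : seq Y, forall x, S x -> exists2 z, z \in s & `|x - z| < e.

Lemma tb_sub (A B : set Y) : A `<=` B -> tb B -> tb A.
Proof. by move=> AB hB e e0; have [s hs] := hB e e0; exists s => x /AB /hs. Qed.

Lemma compact_tb (C : set Y) : compact C -> tb C.
Proof.
rewrite compact_cover => cC e e0.
have [] := cC Y C (fun z => ball z e) (fun z _ => ball_open z e).
  by move=> x Cx; exists x => //; exact: ballxx.
move=> D _ cov; exists (finmap.enum_fset D) => x /cov [z zD].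
by rewrite -ball_normE /= distrC => h; exists z.
Qed.

Lemma seq_bound (s : seq Y) : exists M, 0 <= M /\ forall z, z \in s -> `|z| <= M.
Proof.
elim: s => [|a s [M [M0 hM]]]; first by exists 0; split.
exists (`|a| + M); split; first by rewrite addr_ge0.
move=> z; rewrite inE => /orP[/eqP->|/hM zM]; first by rewrite lerDl.
by rewrite (le_trans zM) // lerDr.
Qed.

Lemma tb_bounded (S : set Y) : tb S -> exists M, forall x, S x -> `|x| <= M.
Proof.
move=> /(_ 1 ltr01) [s hs]; have [M [_ hM]] := seq_bound s.
exists (M + 1) => x /hs [z /hM zM xz].
have : `|x| <= `|z| + `|x - z|.
  by rewrite (le_trans _ (ler_normD _ _)) // addrC subrK.
move=> /le_trans; apply; rewrite lerD //; exact: ltW.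
Qed.

Lemma ultra_seq (U : set_system Y) (UF : UltraFilter U) (s : seq Y)
  (Q : Y -> set Y) :
  U (fun p => exists2 z, z \in s & Q z p) -> exists2 z, z \in s & U (Q z).
Proof.
elim: s => [|a s IH] h.
  have : U set0 by apply: filterS h => p [z]; rewrite in_nil.
  by move/filter_not_empty.
case: (in_ultra_setVsetC (Q a) UF) => [Ua|UnQ]; first by exists a; rewrite ?mem_head.
have [|z zs Uz] := IH; last by exists z => //; rewrite inE zs orbT.
apply: filterS (filterI h UnQ) => p [[z]]; rewrite inE => /orP[/eqP->//|zs q _].
by exists z.
Qed.

Lemma relcomp_sub (A B : set Y) : A `<=` B -> relatively_compact B ->
  relatively_compact A.
Proof.
rewrite /relatively_compact => AB hB; apply: (@subclosed_compact _ (closure A) (closure B) (@closed_closure _ A) hB).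
exact: closure_subset.
Qed.

Lemma relcomp_tb (A : set Y) : relatively_compact A -> tb A.
Proof. move=> /compact_tb; apply: tb_sub; exact: subset_closure. Qed.

End Topo.

Section TopoC.
Variables (K : numFieldType) (Y : completeNormedModType K).

Lemma tb_relcomp (S : set Y) : tb S -> relatively_compact S.
Proof.
move=> hS; rewrite /relatively_compact compact_ultra => U UF Ucl.
have cU : cauchy U.
  apply: cauchy_exP => e e0.
  have e20 : 0 < e / 2 by rewrite divr_gt0.
  have [s hs] := hS _ e20.
  have : U (fun p => exists2 z, z \in s & ball z e p).
    apply: filterS Ucl => p clp.
    have [x [Sx]] := clp _ (nbhsx_ballx p _ e20).
    rewrite -ball_normE /= => px.
    have [z zs xz] := hs x Sx; exists z => //.
    rewrite (le_lt_trans (ler_distD x _ _)) // [e]splitr ltrD //.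
      by rewrite distrC.
    by rewrite distrC.
  by move=> /(ultra_seq UF) [z _ Uz]; exists z.
have PU : ProperFilter U := @ultra_proper _ U UF.
have cvU : U --> lim U := @cauchy_cvg _ U PU cU.
exists (lim U); split => //.
exact: (@closed_cvg _ _ U PU id (closure S) (@closed_closure _ S) Ucl _ cvU).
Qed.

End TopoC.

Section Combo.
Variables (K : numFieldType) (Y : normedModType K).

Definition DN := forall d : K, 0 < d -> exists s : seq K,
  forall c : K, `|c| <= 1 -> exists2 a, a \in s & `|c - a| < d.

Definition combo (v : nat -> Y) (k : nat) : set Y := fun z =>
  exists c : nat -> K, (forall i, `|c i| <= 1) /\ z = \sum_(i < k) c i *: v i.

Lemma tb_combo (hd : DN) (v : nat -> Y) k : tb (combo v k).
Proof.
elim: k => [|k IH] e e0.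
  exists [:: 0] => z [c [_ ->]]; exists 0; first by rewrite mem_head.
  by rewrite big_ord0 subrr normr0.
have e20 : 0 < e / 2 by rewrite divr_gt0.
have [s1 hs1] := IH _ e20.
have d0 : 0 < e / 2 / (`|v k| + 1) by rewrite divr_gt0 // ltr_wpDl.
have [s2 hs2] := hd _ d0.
exists [seq a + b *: v k | a <- s1, b <- s2] => z [c [c1 ->]].
have [a as1 ha] := hs1 (\sum_(i < k) c i *: v i) (ex_intro _ c (conj c1 erefl)).
have [b bs2 hb] := hs2 _ (c1 k).
exists (a + b *: v k); first exact: allpairs_f.
rewrite big_ord_recr /= opprD addrACA -scalerBl.
rewrite (le_lt_trans (ler_normD _ _)) // [e]splitr ltr_leD //.
rewrite normrZ (le_trans (ler_wpM2r (normr_ge0 _) (ltW hb))) //.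
by rewrite mulrAC ler_pdivrMr ?ltr_wpDl // ler_wpM2l ?ltW // ltrDl.
Qed.

Lemma tb_approx (S : set Y) :
  (forall e : K, 0 < e -> exists S', tb S' /\
     forall x, S x -> exists2 x', S' x' & `|x - x'| < e) -> tb S.
Proof.
move=> h e e0; have e20 : 0 < e / 2 by rewrite divr_gt0.
have [S' [tS' hS']] := h _ e20; have [s hs] := tS' _ e20.
exists s => x /hS' [x' /hs [z zs x'z] xx']; exists z => //.
rewrite (le_lt_trans (ler_distD x' _ _)) // [e]splitr ltrD //.
Qed.

End Combo.

Lemma greedy (T : choiceType) (x0 : T) (G : seq T -> T -> Prop) :
  (forall s, exists x, G s x) -> exists u : nat -> T, forall n, G (mkseq u n) (u n).
Proof.
move=> hG; pose g s := xget x0 (G s).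
pose pref := fix pref n := if n is n'.+1 then rcons (pref n') (g (pref n')) else [::].
exists (fun n => g (pref n)) => n.
have -> : mkseq (fun n => g (pref n)) n = pref n.
  by elim: n => [//|n IH]; rewrite mkseqS IH.
exact: xgetPex.
Qed.

Lemma pigeon (Z : eqType) (s : seq Z) (Q : Z -> nat -> Prop) :
  (forall N, exists n, (N <= n)%N /\ exists2 z, z \in s & Q z n) ->
  exists2 z, z \in s & forall N, exists n, (N <= n)%N /\ Q z n.
Proof.
elim: s => [|a s IH] h.
  by have [n [_ [z]]] := h 0%N; rewrite in_nil.
case: (pselect (forall N, exists n, (N <= n)%N /\ Q a n)) => [ha|na].
  by exists a; rewrite ?mem_head.
have [N0 hN0] : exists N0, forall n, (N0 <= n)%N -> ~ Q a n.
  apply: contrapT => hn; apply: na => N; apply: contrapT => hN.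
  by apply: hn; exists N => n Nn Qn; apply: hN; exists n.
suff : exists2 z, z \in s & forall N, exists n, (N <= n)%N /\ Q z n.
  by case => z zs hz; exists z => //; rewrite inE zs orbT.
apply: IH => N; have [n [Nn [z]]] := h (maxn N N0).
rewrite inE => /orP[/eqP->|zs] Qn.
  by exfalso; apply: (hN0 n) => //; exact: leq_trans (leq_maxr _ _) Nn.
by exists n; split; [exact: leq_trans (leq_maxl _ _) Nn|exists z].
Qed.

Lemma ev_nat (P : nat -> Prop) :
  (\forall n \near \oo, P n) -> exists N, forall n, (N <= n)%N -> P n.
Proof. by case => N _ h; exists N => n Nn; apply: h. Qed.

Lemma nat_ev (P : nat -> Prop) :
  (exists N, forall n, (N <= n)%N -> P n) -> \forall n \near \oo, P n.
Proof. by case => N h; exists N => // n; apply: h. Qed.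

Lemma leq_sum_mem (s : seq nat) i : i \in s -> (i <= \sum_(j <- s) j)%N.
Proof.
elim: s => [|a s IH]; first by rewrite in_nil.
rewrite inE big_cons => /orP[/eqP->|/IH h]; first exact: leq_addr.
exact: leq_trans h (leq_addl _ _).
Qed.

Fixpoint bs (r : nat) : nat := if r is r'.+1 then (bs r' + r'.+1 ^ 2)%N else 0%N.

Lemma bs_le r r' : (r < r')%N -> (bs r + r.+1 ^ 2 <= bs r')%N.
Proof.
elim: r' => // r' IH; rewrite ltnS leq_eqVlt => /orP[/eqP->//|/IH h].
by rewrite /= (leq_trans h) // leq_addr.
Qed.

Lemma notin_inj (Z : eqType) (f : nat -> Z) :
  (forall n, f n \notin mkseq f n) -> forall i j, i != j -> f i != f j.
Proof.
move=> hf i j.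
wlog ij : i j / (i < j)%N.
  move=> wl; rewrite neq_ltn => /orP[ij|ji].
    by apply: wl => //; rewrite ltn_eqF.
  by rewrite eq_sym; apply: wl => //; rewrite ltn_eqF.
move=> _; have := hf j; apply: contraNN => /eqP <-.
by apply/mapP; exists i; rewrite // mem_iota.
Qed.

Section Main.
Variables (K : numFieldType) (conj : K -> K) (H : normedModType K)
  (inner : H -> H -> K) (Y : completeNormedModType K) (T : {linear H -> Y}).
Hypothesis hip : is_inner_product conj inner.

Let P1 := compact_operator T.
Let P2 := forall A : set H, orthonormal_set inner A -> relatively_compact (T @` A).
Let P3 := forall u : nat -> H, orthonormal_seq inner u ->
         (fun n => `|T (u n)|) @ \oo --> (0 : K).
Let P4 := forall A : set H, orthonormal_basis inner A ->
         forall eps : K, 0 < eps -> finite_set [set a | A a /\ eps <= `|T a|].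
Let P5 := forall A : set H, orthonormal_basis inner A -> relatively_compact (T @` A).

Lemma inner0r x : inner x 0 = 0.
Proof. exact: (inner_sym0 hip (inner0l hip x)). Qed.

Lemma i_ii : P1 -> P2.
Proof.
move=> h1 A hA; apply: relcomp_sub h1 => _ [a Aa <-]; exists a => //=.
by rewrite (norm_unit hip (_ : inner a a = 1)) // hA // eqxx.
Qed.

Lemma ortho_seqP (u : nat -> H) :
  (forall i, inner (u i) (u i) = 1) -> (forall i j, i != j -> inner (u i) (u j) = 0) ->
  orthonormal_seq inner u.
Proof.
move=> h1 h0 i j; case: eqP => [->|/eqP ij]; first exact: h1.
exact: h0.
Qed.

Lemma ortho_range (u : nat -> H) : orthonormal_seq inner u ->
  orthonormal_set inner (range u).
Proof.
move=> hu _ _ [i _ <-] [j _ <-]; rewrite hu.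
case: eqP => [->|/eqP ij]; first by rewrite eqxx.
case: eqP => // uij; exfalso.
by have := hu j j; rewrite -{1}uij hu (negbTE ij) eqxx => /eqP; rewrite eq_sym oner_eq0.
Qed.

Lemma cvg0_ev (f : nat -> K) : f @ \oo --> (0 : K) ->
  forall eps, 0 < eps -> exists N, forall n, (N <= n)%N -> `|f n| < eps.
Proof. by move=> /cvgr0Pnorm_lt h eps eps0; apply: ev_nat; exact: h. Qed.

Lemma iii_iv : P3 -> P4.
Proof.
move=> h3 A [hA _] eps eps0; apply: contrapT => ninf.
pose G (s : seq H) x := (A x /\ eps <= `|T x|) /\ x \notin s.
have [u hu] : exists u : nat -> H, forall n, G (mkseq u n) (u n).
  apply: (@greedy H 0 G) => s; apply: contrapT => nx; apply: ninf.
  apply: (sub_finite_set _ (finite_seq s)) => x hx /=.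
  apply: contrapT => /negP xs; apply: nx; exists x; split => //.
have uinj i j : i != j -> u i != u j.
  wlog ij : i j / (i < j)%N.
    move=> wl; rewrite neq_ltn => /orP[ij|ji].
      by apply: wl => //; rewrite ltn_eqF.
    by rewrite eq_sym; apply: wl => //; rewrite ltn_eqF.
  move=> _; have [_] := hu j; apply: contraNN => /eqP <-.
  by apply/mapP; exists i; rewrite // mem_iota.
have ou : orthonormal_seq inner u.
  apply: ortho_seqP => [i|i j ij].
    by rewrite hA ?eqxx //; case: (hu i) => [[]].
  by rewrite hA ?(negbTE (uinj _ _ ij)) //; [case: (hu i) => [[]]|case: (hu j) => [[]]].
have [N hN] := cvg0_ev (h3 _ ou) eps0.
have := hN N (leqnn N); rewrite normr_id; case: (hu N) => [[_ le] _].
by rewrite real_ltNge ?normr_real ?gtr0_real // le.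
Qed.

Lemma iv_v : P4 -> P5.
Proof.
move=> h4 A hA; apply: tb_relcomp => e e0.
have /finite_seqP [s hs] := h4 A hA e e0.
exists (0 :: map T s) => _ [a Aa <-].
case: (boolP (e <= `|T a|)) => ea.
  have : [set a | A a /\ e <= `|T a|] a by split.
  rewrite hs /= => as_; exists (T a); first by rewrite inE map_f ?orbT.
  by rewrite subrr normr0.
exists 0; first exact: mem_head.
by rewrite subr0 real_ltNge ?normr_real ?gtr0_real.
Qed.

Lemma ext_onb (A : set H) : orthonormal_set inner A ->
  exists B, A `<=` B /\ orthonormal_basis inner B.
Proof.
move=> hA.
have hZ : forall F : set (set H),
    F `<=` (fun X => orthonormal_set inner (A `|` X)) -> total_on F subset ->
    orthonormal_set inner (A `|` \bigcup_(X in F) X).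
  move=> F FP Ftot x y [Ax|[X1 FX1 X1x]] [Ay|[X2 FX2 X2y]].
  - exact: hA.
  - by apply: (FP _ FX2); [left|right].
  - by apply: (FP _ FX1); [right|left].
  - have [X12|X21] := Ftot _ _ FX1 FX2.
      by apply: (FP _ FX2); right => //; apply: X12.
    by apply: (FP _ FX1); right => //; apply: X21.
have [X [PX maxX]] := Zorn_bigcup hZ.
exists (A `|` X); split; first by move=> x Ax; left.
split => // x hx; apply: contrapT => /eqP x0.
pose e := `|x|^-1 *: x.
have e1 : `|e| = 1 by exact: normfZV.
have ee : inner e e = 1 by rewrite (innerxx hip) e1 expr1n.
have eB a : (A `|` X) a -> inner e a = 0.
  by move=> Ba; rewrite (innerZl hip) hx // mulr0.
have enB : ~ (A `|` X) e.
  by move=> /eB; rewrite ee => /eqP; rewrite oner_eq0.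
apply: (maxX (X `|` [set e])).
  split; first by move=> y Xy; left.
  by move=> sub; apply: enB; right; apply: sub; right.
move=> y z hy hz.
have hy' : (A `|` X) y \/ y = e.
  by case: hy => [|[|]]; [left; left|left; right|right].
have hz' : (A `|` X) z \/ z = e.
  by case: hz => [|[|]]; [left; left|left; right|right].
case: hy' => [By|->]; case: hz' => [Bz|->].
- exact: PX.
- rewrite (inner_sym0 hip (eB _ By)); case: eqP => // yz.
  by exfalso; apply: enB; rewrite -yz.
- rewrite eB //; case: eqP => // ez.
  by exfalso; apply: enB; rewrite ez.
- by rewrite eqxx.
Qed.

Lemma v_ii : P5 -> P2.
Proof.
move=> h5 A hA; have [B [AB hB]] := ext_onb hA.
apply: relcomp_sub (h5 _ hB) => _ [a Aa <-]; exists a => //; exact: AB.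
Qed.

Lemma sum_inner0 (u : nat -> H) (hu : orthonormal_seq inner u) (q : nat -> nat) N a :
  (forall i, (i < N)%N -> q i != a) -> inner (\sum_(i < N) u (q i)) (u a) = 0.
Proof.
move=> h; rewrite (inner_suml hip) big1 // => i _.
by rewrite hu (negbTE (h i (ltn_ord i))).
Qed.

Lemma sum_norm2 (u : nat -> H) (hu : orthonormal_seq inner u) (q : nat -> nat) N :
  (forall i j, (i < N)%N -> (j < N)%N -> q i = q j -> i = j) ->
  `|\sum_(i < N) u (q i)| ^+ 2 = N%:R.
Proof.
elim: N => [|N IH] h; first by rewrite big_ord0 normr0 expr0n.
rewrite big_ord_recr /= (pythag hip).
  rewrite IH; last by move=> i j iN jN; apply: h; apply: ltnW.
  by rewrite -(innerxx hip) hu eqxx mulrSr.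
apply: (sum_inner0 hu) => i iN; apply/eqP => /h.
by move=> /(_ (ltnW iN) (leqnn _)) ie; move: iN; rewrite ie ltnn.
Qed.

Lemma sum_inner_disj (u : nat -> H) (hu : orthonormal_seq inner u)
  (q q' : nat -> nat) N N' (c c' : K) :
  (forall i j, (i < N)%N -> (j < N')%N -> q i != q' j) ->
  inner (c *: \sum_(i < N) u (q i)) (c' *: \sum_(j < N') u (q' j)) = 0.
Proof.
move=> h; rewrite (innerZl hip) (inner_suml hip) big1 ?mulr0 // => i _.
apply: (inner_sym0 hip); rewrite (innerZl hip) (sum_inner0 hu) ?mulr0 // => j jN.
by rewrite eq_sym; apply: h.
Qed.

Lemma ii_iii (harch : forall x : K, 0 <= x -> exists n : nat, x <= n%:R) :
  P2 -> P3.
Proof.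
move=> h2 u hu; apply/cvgr0Pnorm_lt => eps eps0; apply: nat_ev.
apply: contrapT => hn.
have inf N : exists n, (N <= n)%N /\ eps <= `|T (u n)|.
  apply: contrapT => hN; apply: hn; exists N => n Nn.
  rewrite normr_id real_ltNge ?normr_real ?gtr0_real //; apply/negP => le.
  by apply: hN; exists n.
pose d := eps / 4.
have d0 : 0 < d by rewrite divr_gt0.
have [s hs] := relcomp_tb (h2 _ (ortho_range hu)) d0.
have [y ys hy] : exists2 y, y \in s & forall N, exists n, (N <= n)%N /\
    (eps <= `|T (u n)| /\ `|T (u n) - y| < d).
  apply: pigeon => N; have [n [Nn hn']] := inf N.
  have [z zs hz] := hs (T (u n)) (ex_intro2 _ _ (u n) (ex_intro2 _ _ n I erefl) erefl).
  by exists n; split => //; exists z.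
have yb : eps / 2 <= `|y| - d.
  have [n [_ [en dn]]] := hy 0%N.
  have e2 : eps / 2 = eps - d - d by rewrite /d; field.
  rewrite e2 lerD2r lerBlDr (le_trans en) // (le_trans (_ : _ <= `|T (u n) - y| + `|y|)) //.
    by rewrite (le_trans _ (ler_normD _ _)) // subrK.
  by rewrite addrC lerD2l ltW.
pose G (s : seq nat) n := (eps <= `|T (u n)| /\ `|T (u n) - y| < d) /\ n \notin s.
have [m hm] : exists m : nat -> nat, forall n, G (mkseq m n) (m n).
  apply: (@greedy nat 0%N G) => s'.
  have [n [Nn hn']] := hy (\sum_(j <- s') j).+1.
  exists n; split => //; apply/negP => /leq_sum_mem.
  by rewrite leqNgt Nn.
have minj := notin_inj (fun n => (hm n).2).
pose p r i := m (bs r + i).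
have disj r r' : r != r' -> forall i j, (i < r.+1 ^ 2)%N -> (j < r'.+1 ^ 2)%N ->
    p r i != p r' j.
  wlog rr : r r' / (r < r')%N.
    move=> wl; rewrite neq_ltn => /orP[rr|rr] i j ir jr.
      by apply: wl => //; rewrite ltn_eqF.
    by rewrite eq_sym; apply: wl => //; rewrite ltn_eqF.
  move=> _ i j ir jr; apply: minj; rewrite neq_ltn.
  rewrite (leq_trans _ (leq_addr j _)) // (leq_trans _ (bs_le rr)) //.
  by rewrite ltn_add2l.
have pinj r i j : p r i = p r j -> i = j.
  move=> pij; apply/eqP; apply: contraT => ij.
  move: (minj (bs r + i) (bs r + j)); rewrite eqn_add2l => /(_ ij).
  by rewrite /p in pij; rewrite pij eqxx.
pose w r := (r.+1%:R : K)^-1 *: \sum_(i < r.+1 ^ 2) u (p r i).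
have ow : orthonormal_seq inner w.
  apply: ortho_seqP => [r|r r' rr].
    rewrite (innerxx hip) normrZ exprMn sum_norm2 //; last first.
      by move=> i j _ _; apply: pinj.
    by rewrite ger0_norm ?invr_ge0 ?ler0n // natrX -exprMn mulVf ?expr1n.
  by apply: sum_inner_disj => // i j; apply: disj.
have [M hM] := tb_bounded (relcomp_tb (h2 _ (ortho_range ow))).
have inW r : (T @` range w) (T (w r)) by exists (w r) => //; exists r.
have lb r : eps / 2 * r.+1%:R <= `|T (w r)|.
  rewrite linearZ linear_sum /= normrZ ger0_norm ?invr_ge0 ?ler0n //.
  have hsum : (`|y| - d) *+ (r.+1 ^ 2) <= `|\sum_(i < r.+1 ^ 2) T (u (p r i))|.
    set N := (r.+1 ^ 2)%N.
    have e1 : y *+ N = \sum_(i < N) T (u (p r i)) - \sum_(i < N) (T (u (p r i)) - y).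
      by rewrite sumrB sumr_const card_ord opprB addrC subrK.
    have h1 : `|\sum_(i < N) (T (u (p r i)) - y)| <= d *+ N.
      rewrite (le_trans (ler_norm_sum _ _ _)) //.
      rewrite -[X in _ <= d *+ X](card_ord N) -sumr_const ler_sum // => i _.
      by have [[_ /ltW]] := hm (bs r + i).
    rewrite mulrnBl lerBlDr -normrMn e1 (le_trans (ler_normB _ _)) //.
    by rewrite lerD2l.
  rewrite (le_trans _ (ler_wpM2l _ hsum)) ?invr_ge0 ?ler0n //.
  rewrite -[(_ - d) *+ _]mulr_natr natrX mulrCA expr2 mulKf ?pnatr_eq0 //.
  by rewrite ler_wpM2r ?ler0n.
have M0 : 0 <= M by rewrite (le_trans _ (hM _ (inW 0%N))).
have [k hk] := harch (M / (eps / 2)) (divr_ge0 M0 (ltW (divr_gt0 eps0 (ltr0Sn K 1)))).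
have := le_trans (lb k) (hM _ (inW k)).
rewrite ler_pdivrMr ?divr_gt0 // in hk.
have : M < eps / 2 * k.+1%:R.
  rewrite (le_lt_trans hk) // mulrC ltr_pM2l ?divr_gt0 // ltr_nat //.
by move=> /lt_le_trans h /h; rewrite ltxx.
Qed.

Lemma iii_i (hdn : DN K) : P3 -> P1.
Proof.
move=> h3.
pose OL (s : seq H) := forall i j, (i < size s)%N -> (j < size s)%N ->
  inner s`_i s`_j = if i == j then 1 else 0.
have F1 eps : 0 < eps -> exists s : seq H, OL s /\
    forall x, (forall i, (i < size s)%N -> inner x s`_i = 0) -> `|T x| <= eps * `|x|.
  move=> eps0; apply: contrapT => hn.
  pose G (s : seq H) x := OL s -> (forall i, (i < size s)%N -> inner x s`_i = 0)
    /\ `|x| = 1 /\ eps < `|T x|.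
  have [u hu] : exists u : nat -> H, forall n, G (mkseq u n) (u n).
    apply: (@greedy H 0 G) => s.
    case: (pselect (OL s)) => [ols|nols]; last by exists 0 => /nols.
    have [x [xs Tx]] : exists x, (forall i, (i < size s)%N -> inner x s`_i = 0)
        /\ eps * `|x| < `|T x|.
      apply: contrapT => nx; apply: hn; exists s; split => // x xs.
      rewrite real_leNgt ?realM ?normr_real ?gtr0_real //; apply/negP => lt.
      by apply: nx; exists x.
    have x0 : x != 0.
      by apply: contraTneq Tx => ->; rewrite linear0 !normr0 mulr0 ltxx.
    exists (`|x|^-1 *: x) => _; split; [|split].
    - by move=> i ilt; rewrite (innerZl hip) xs ?mulr0.
    - exact: normfZV.
    - rewrite linearZ normrZ normfV normr_id ltr_pdivlMl ?normr_gt0 //.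
      by rewrite mulrC.
  have OLQ n : (forall i j, (i < n)%N -> (j < n)%N ->
      inner (u i) (u j) = if i == j then 1 else 0) -> OL (mkseq u n).
    move=> Q i j; rewrite size_mkseq => i_n j_n; rewrite !nth_mkseq //.
    exact: Q.
  have Q n : forall i j, (i < n)%N -> (j < n)%N ->
      inner (u i) (u j) = if i == j then 1 else 0.
    elim: n => [//|n IH] i j.
    have [hx [x1 _]] := hu n (OLQ n IH).
    have hx' i' : (i' < n)%N -> inner (u n) (u i') = 0.
      by move=> i'n; have := hx i'; rewrite size_mkseq nth_mkseq // => /(_ i'n).
    move=> hi hj; rewrite ltnS leq_eqVlt in hi; rewrite ltnS leq_eqVlt in hj.
    case/orP: hi => [/eqP->|ilt]; case/orP: hj => [/eqP->|jlt].
    - by rewrite eqxx (innerxx hip) x1 expr1n.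
    - by rewrite gtn_eqF // hx'.
    - by rewrite ltn_eqF // (inner_sym0 hip (hx' _ ilt)).
    - exact: IH.
  have ou : orthonormal_seq inner u.
    by move=> i j; apply: (Q (maxn i j).+1); rewrite ltnS ?leq_maxl ?leq_maxr.
  have [N hN] := cvg0_ev (h3 _ ou) eps0.
  have := hN N (leqnn N); rewrite normr_id.
  have [_ [_ Tx]] := hu N (OLQ N (Q N)).
  by move=> /(lt_trans Tx); rewrite ltxx.
apply: tb_relcomp; apply: tb_approx => e e0.
have e20 : 0 < e / 2 by rewrite divr_gt0.
have [s [ols hs]] := F1 _ e20.
exists (combo (fun i => T s`_i) (size s)); split; first exact: tb_combo.
move=> _ [x x1 <-].
pose c i := inner x s`_i.
pose Px := \sum_(i < size s) c i *: s`_i.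
exists (\sum_(i < size s) c i *: T s`_i).
  exists c; split => // i.
  case: (ltnP i (size s)) => isz.
    rewrite (le_trans (cs_unit hip _ _)) //.
    by apply: (norm_unit hip); rewrite ols // eqxx.
  by rewrite /c nth_default // inner0r normr0.
have TPx : T Px = \sum_(i < size s) c i *: T s`_i.
  by rewrite linear_sum; apply: eq_bigr => i _; rewrite linearZ.
rewrite -TPx -linearB.
have zs i : (i < size s)%N -> inner (x - Px) s`_i = 0.
  move=> isz; rewrite (innerBl hip) (inner_suml hip).
  rewrite (bigD1 (Ordinal isz)) //= big1 => [|j ji].
    by rewrite (innerZl hip) ols // eqxx mulr1 addr0 subrr.
  rewrite (innerZl hip) ols //; case: eqP => [jeq|]; last by rewrite mulr0.
  by exfalso; move: ji; rewrite -val_eqE /= jeq eqxx.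
have hz := hs _ zs.
rewrite (le_lt_trans hz) //.
have zx : `|x - Px| <= 1.
  have iPz : inner Px (x - Px) = 0.
    rewrite (inner_suml hip) big1 // => i _.
    by rewrite (innerZl hip) (inner_sym0 hip (zs _ (ltn_ord i))) mulr0.
  have := pythag hip (inner_sym0 hip iPz); rewrite subrK => h.
  have : `|x - Px| <= `|x|.
    by rewrite -(ler_pXn2r (n:=2)) ?nnegrE // h lerDl exprn_ge0.
  by move=> /le_trans; apply.
rewrite (le_lt_trans (ler_wpM2l (ltW e20) zx)) // mulr1 ltr_pdivrMr //.
by rewrite ltr_pMr // ltr1n.
Qed.

Lemma main_tfae (hdn : DN K)
  (harch : forall x : K, 0 <= x -> exists n : nat, x <= n%:R) :
  [<-> P1; P2; P3; P4; P5].
Proof.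
tfae.
- exact: i_ii.
- exact: ii_iii.
- exact: iii_iv.
- exact: iv_v.
- by move=> h5; apply: iii_i => //; apply: ii_iii => //; apply: v_ii.
Qed.

End Main.

Section Inst.
Variable R : realType.

Lemma arch_R (x : R) : 0 <= x -> exists n : nat, x <= n%:R.
Proof. by move=> x0; exists (Num.Def.archi_bound x); apply: ltW; exact: archi_boundP. Qed.

Lemma DN_R : DN R.
Proof.
move=> d d0.
have [s hs] := compact_tb (Y := R) (@segment_compact R (-1) 1) d0.
exists s => c c1; apply: hs; rewrite /= in_itv /= -ler_norml //.
Qed.

Local Open Scope complex_scope.

Lemma arch_C (x : R[i]) : 0 <= x -> exists n : nat, x <= n%:R.
Proof.
move=> x0; have := x0; rewrite lecE /= => /andP[/eqP hi hr].
have [n hn] := arch_R hr; exists n.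
by rewrite lecE -(rmorph_nat (real_complex R)) /= hi eqxx hn.
Qed.

Lemma DN_C : DN R[i].
Proof.
move=> d d0.
have dIm := ger0_Im (ltW d0).
have dRe : 0 < complex.Re d by move: d0; rewrite ltcE /= => /andP[].
have dE : d = (complex.Re d)%:C by case: d d0 dIm {dRe} => a b /= _ ->.
have [g hg] := DN_R (divr_gt0 dRe (ltr0Sn R 1)).
exists [seq (a +i* b) | a <- g, b <- g] => -[c1 c2] c1le.
have hs : Num.sqrt (c1 ^+ 2 + c2 ^+ 2) <= 1.
  by move: c1le; rewrite normc_def /= -[1 : R[i]]/((1 : R)%:C) lecR.
have hc1 : `|c1| <= 1.
  rewrite -sqrtr_sqr; apply: le_trans hs.
  by rewrite ler_sqrt ?addr_ge0 ?sqr_ge0 // lerDl sqr_ge0.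
have hc2 : `|c2| <= 1.
  rewrite -sqrtr_sqr; apply: le_trans hs.
  by rewrite ler_sqrt ?addr_ge0 ?sqr_ge0 // lerDr sqr_ge0.
have [a ag ha] := hg _ hc1; have [b bg hb] := hg _ hc2.
exists (a +i* b); first exact: allpairs_f.
have -> : (c1 +i* c2) - (a +i* b) = (c1 - a) +i* (c2 - b) by reflexivity.
rewrite normc_def /= dE ltcR.
set x := c1 - a; set y := c2 - b.
rewrite (le_lt_trans (_ : _ <= `|x| + `|y|)) //; last first.
  by rewrite [complex.Re d]splitr ltrD.
rewrite -(ler_pXn2r (n:=2)) ?nnegrE ?sqrtr_ge0 ?addr_ge0 //.
rewrite sqr_sqrtr ?addr_ge0 ?sqr_ge0 // (sqrrD `|x|) !real_normK ?num_real //.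
by rewrite lerD2r lerDl mulrn_wge0 // mulr_ge0.
Qed.

End Inst.

Local Open Scope ring_scope.
Local Open Scope complex_scope.

Theorem theorem6 (R : realType) :
  theorem6_stmt (fun x : R => x) /\ theorem6_stmt (fun z : R[i] => z^*).
Proof.
split => H inner Y T hip.
- exact: (main_tfae T hip (@DN_R R) (@arch_R R)).
- exact: (main_tfae T hip (@DN_C R) (@arch_C R)).
Qed.
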